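(* Let $T>0$, let $F:\mathbb{R}^n\rightrightarrows\mathbb{R}^n$ be a set-valued mapping with closed graph, and let $f:[0,T]\times\mathbb{R}^n\to\mathbb{R}^n$ be continuously differentiable. Let $x:[0,T]\to\mathbb{R}^n$ be continuous with $0\in f(t,x(t))+F(x(t))$ for each $t\in[0,T]$, and set $W:=\{(x(t),-f(t,x(t))):t\in[0,T]\}$. Suppose $F$ is uniformly semismooth$^*$ on $W$. Then for each $\varepsilon>0$ there is $\delta>0$ such that for each $t\in[0,T]$, each $(x,y)\in(B[x(t),\delta]\times B[0,\delta])\cap\operatorname{gph}(f(t,\cdot)+F)$ and each $(y^*,x^* )\in\operatorname{gph}D^*(f(t,\cdot)+F)(x,y)$ we have $$|\langle x^*,x-x(t)\rangle-\langle y^*,y\rangle|\le\varepsilon\|(x^*,y^* )\|\,\|(x,y)-(x(t),0)\|.$$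
   Context: Euclidean norm on $\mathbb{R}^n$, max-norm $\|(a,b)\|=\max\{\|a\|,\|b\|\}$ on products; $B[z,r]$ is the closed ball. The limiting coderivative of a set-valued map $G$ at $(x,y)\in\operatorname{gph}G$ is given by $\operatorname{gph}D^*G(x,y)=\{(y^*,x^* ):(x^*,-y^* )\in N_{\operatorname{gph}G}(x,y)\}$, $N$ the limiting normal cone. $F$ is uniformly semismooth$^*$ on a set $W$ if for each $\varepsilon>0$ there is $\delta>0$ such that for each $(u,z)\in W$, each $(x,y)\in(B[u,\delta]\times B[z,\delta])\cap\operatorname{gph}F$ and each $(y^*,x^* )\in\operatorname{gph}D^*F(x,y)$: $|\langle x^*,x-u\rangle-\langle y^*,y-z\rangle|\le\varepsilon\|(x^*,y^* )\|\,\|(x,y)-(u,z)\|$. *)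

(* Defs.v *)
From HB Require Import structures.
From mathcomp Require Import all_boot all_order all_algebra.
From mathcomp Require Import reals.
Set Implicit Arguments. Unset Strict Implicit. Unset Printing Implicit Defensive.
Import Order.TTheory GRing.Theory Num.Theory.
Local Open Scope ring_scope.

Section Defs.
Context {R : realType} {n : nat}.
Local Notation vec := 'rV[R]_n.

Definition dot (u v : vec) : R := \sum_(i < n) u 0 i * v 0 i.
Definition enorm (u : vec) : R := Num.sqrt (dot u u).

Definition pnorm (p : vec * vec) : R := Num.max (enorm p.1) (enorm p.2).
Definition pdot (p q : vec * vec) : R := dot p.1 q.1 + dot p.2 q.2.
Definition psub (p q : vec * vec) : vec * vec := (p.1 - q.1, p.2 - q.2).

Definition pconv (u : nat -> vec * vec) (l : vec * vec) : Prop :=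
  forall eps : R, 0 < eps -> exists N : nat, forall k : nat, (N <= k)%N ->
    pnorm (psub (u k) l) <= eps.

(* set-valued maps R^n =>> R^n: F x y means y in F(x) *)
Definition gph (F : vec -> vec -> Prop) : vec * vec -> Prop :=
  fun p => F p.1 p.2.

Definition closed_pset (A : vec * vec -> Prop) : Prop :=
  forall (zk : nat -> vec * vec) (z : vec * vec),
    (forall k, A (zk k)) -> pconv zk z -> A z.

Definition regular_normal (A : vec * vec -> Prop) (z v : vec * vec) : Prop :=
  A z /\
  forall eps : R, 0 < eps -> exists delta : R, 0 < delta /\
    forall z', A z' -> pnorm (psub z' z) <= delta ->
      pdot v (psub z' z) <= eps * pnorm (psub z' z).

Definition limiting_normal (A : vec * vec -> Prop) (z v : vec * vec) : Prop :=
  A z /\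
  exists (zk vk : nat -> vec * vec),
    (forall k, A (zk k) /\ regular_normal A (zk k) (vk k)) /\
    pconv zk z /\ pconv vk v.

Definition coderiv (G : vec -> vec -> Prop) (x y ystar xstar : vec) : Prop :=
  limiting_normal (gph G) (x, y) (xstar, - ystar).

Definition unif_semismooth_star (F : vec -> vec -> Prop)
    (W : vec * vec -> Prop) : Prop :=
  forall eps : R, 0 < eps -> exists delta : R, 0 < delta /\
    forall u z : vec, W (u, z) ->
    forall x y : vec, enorm (x - u) <= delta -> enorm (y - z) <= delta ->
    F x y ->
    forall ystar xstar : vec, coderiv F x y ystar xstar ->
      `|dot xstar (x - u) - dot ystar (y - z)|
        <= eps * pnorm (xstar, ystar) * pnorm (x - u, y - z).

Definition sum_map (f : R -> vec -> vec) (t : R) (F : vec -> vec -> Prop)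
    : vec -> vec -> Prop :=
  fun x y => exists w, F x w /\ y = f t x + w.

Definition in_T (T t : R) : Prop := 0 <= t /\ t <= T.

Definition cont_on (T : R) (xf : R -> vec) : Prop :=
  forall t, in_T T t -> forall eps : R, 0 < eps -> exists delta : R, 0 < delta /\
    forall s, in_T T s -> `|s - t| <= delta -> enorm (xf s - xf t) <= eps.

(* f : [0,T] x R^n -> R^n continuously differentiable: there is a derivative
   (partial in t: ft, partial in x: the matrix fx acting on row vectors)
   which is a Frechet derivative relative to [0,T] x R^n at every point and
   depends continuously on the point. *)
Definition C1_on (T : R) (f : R -> vec -> vec) : Prop :=
  exists (ft : R -> vec -> vec) (fx : R -> vec -> 'M[R]_n),
    (forall t x, in_T T t ->
       forall eps : R, 0 < eps -> exists delta : R, 0 < delta /\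
         forall s y, in_T T s -> `|s - t| <= delta -> enorm (y - x) <= delta ->
           enorm (f s y - f t x - (s - t) *: ft t x - (y - x) *m fx t x)
             <= eps * Num.max `|s - t| (enorm (y - x))) /\
    (forall t x, in_T T t ->
       forall eps : R, 0 < eps -> exists delta : R, 0 < delta /\
         forall s y, in_T T s -> `|s - t| <= delta -> enorm (y - x) <= delta ->
           enorm (ft s y - ft t x) <= eps /\
           forall i j, `|fx s y i j - fx t x i j| <= eps).

End Defs.

(* Main.v *)
Require Import Defs.
From HB Require Import structures.
From mathcomp Require Import all_boot all_order all_algebra.
From mathcomp Require Import reals.
From mathcomp Require Import classical_sets.
From mathcomp Require Import ring lra.
Import Order.TTheory GRing.Theory Num.Theory.
Local Open Scope ring_scope.
Set Implicit Arguments. Unset Strict Implicit. Unset Printing Implicit Defensive.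

Section LinAlg.
Context {R : realType} {n : nat}.
Local Notation vec := 'rV[R]_n.
Implicit Types (u v w a b h : vec) (A B : 'M[R]_n).

Lemma dotC u v : dot u v = dot v u.
Proof. by apply: eq_bigr => i _; rewrite mulrC. Qed.

Lemma dotDr u v w : dot u (v + w) = dot u v + dot u w.
Proof. rewrite /dot -big_split; apply: eq_bigr => i _; rewrite !mxE /= mulrDr. by []. Qed.

Lemma dotDl u v w : dot (v + w) u = dot v u + dot w u.
Proof. by rewrite dotC dotDr !(dotC u). Qed.

Lemma dotNr u v : dot u (- v) = - dot u v.
Proof. rewrite /dot -sumrN; apply: eq_bigr => i _; rewrite !mxE mulrN. by []. Qed.

Lemma dotNl u v : dot (- u) v = - dot u v.
Proof. by rewrite dotC dotNr dotC. Qed.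

Lemma dotBr u v w : dot u (v - w) = dot u v - dot u w.
Proof. by rewrite dotDr dotNr. Qed.

Lemma dotBl u v w : dot (v - w) u = dot v u - dot w u.
Proof. by rewrite dotDl dotNl. Qed.

Lemma dotZr (a : R) u v : dot u (a *: v) = a * dot u v.
Proof. rewrite /dot mulr_sumr; apply: eq_bigr => i _; rewrite !mxE mulrCA. by []. Qed.

Lemma dot0r u : dot u 0 = 0.
Proof. by rewrite /dot big1 // => i _; rewrite mxE mulr0. Qed.

Lemma dot0l u : dot 0 u = 0.
Proof. by rewrite dotC dot0r. Qed.

Lemma dot_ge0 u : 0 <= dot u u.
Proof. by apply: sumr_ge0 => i _; rewrite -expr2 sqr_ge0. Qed.

Lemma dot_eq0 u : dot u u = 0 -> u = 0.
Proof.
move=> h; apply/rowP => i; rewrite mxE.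
have H0 : forall j : 'I_n, predT j -> 0 <= u 0 j * u 0 j.
  by move=> j _; rewrite -expr2 sqr_ge0.
have /eqP := @psumr_eq0P _ _ predT (fun i => u 0 i * u 0 i) H0 h i isT.
by rewrite mulf_eq0 orbb => /eqP.
Qed.

Lemma enorm_ge0 u : 0 <= enorm u.
Proof. exact: sqrtr_ge0. Qed.

Lemma enorm_sqr u : enorm u ^+ 2 = dot u u.
Proof. by rewrite sqr_sqrtr // dot_ge0. Qed.

Lemma enorm_eq0 u : enorm u = 0 -> u = 0.
Proof. by move=> h; apply: dot_eq0; rewrite -enorm_sqr h expr0n. Qed.

Lemma enorm0 : enorm (0 : vec) = 0.
Proof. by rewrite /enorm dot0r sqrtr0. Qed.

Lemma CS_half u v : dot u v <= enorm u * enorm v.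
Proof.
have [a0|ua] := eqVneq (enorm u) 0.
  by rewrite (enorm_eq0 a0) dot0l enorm0 mul0r.
have [b0|vb] := eqVneq (enorm v) 0.
  by rewrite (enorm_eq0 b0) dot0r enorm0 mulr0.
set a := enorm u; set b := enorm v.
have a0 : 0 < a by rewrite lt_def ua enorm_ge0.
have b0 : 0 < b by rewrite lt_def vb enorm_ge0.
have key : 2 * (a * b) * dot u v <= b ^+ 2 * dot u u + a ^+ 2 * dot v v.
  rewrite /dot !mulr_sumr -big_split /=; apply: ler_sum => i _.
  have h := sqr_ge0 (b * u 0 i - a * v 0 i); nra.
move: key; rewrite -!enorm_sqr -/a -/b => key.
have : 2 * (a * b) * dot u v <= 2 * (a * b) * (a * b) by nra.
have ab0 : 0 < 2 * (a * b) by nra.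
by rewrite ler_pM2l.
Qed.

Lemma enormN u : enorm (- u) = enorm u.
Proof. by rewrite /enorm dotNl dotNr opprK. Qed.

Lemma CS u v : `|dot u v| <= enorm u * enorm v.
Proof.
rewrite ler_norml CS_half andbT.
by rewrite -(enormN v) -[dot u v]opprK -dotNr lerN2 CS_half.
Qed.

Lemma enormD u v : enorm (u + v) <= enorm u + enorm v.
Proof.
rewrite -(@ler_sqr _ (enorm (u + v))) ?nnegrE ?addr_ge0 ?enorm_ge0 //.
rewrite enorm_sqr dotDl !dotDr (dotC v u) sqrrD !enorm_sqr.
have := CS_half u v; lra.
Qed.

Lemma enormB u v : enorm (u - v) <= enorm u + enorm v.
Proof. by rewrite -(enormN v) enormD. Qed.

Lemma enormBC u v : enorm (u - v) = enorm (v - u).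
Proof. by rewrite -enormN opprB. Qed.

Lemma enormZ (a : R) u : enorm (a *: u) = `|a| * enorm u.
Proof.
rewrite /enorm.
have -> : dot (a *: u) (a *: u) = a ^+ 2 * dot u u.
  by rewrite dotZr dotC dotZr mulrA -expr2.
by rewrite sqrtrM ?sqr_ge0 // sqrtr_sqr.
Qed.

Lemma enorm_coord u i : `|u 0 i| <= enorm u.
Proof.
rewrite -sqrtr_sqr ler_sqrt ?dot_ge0 // /dot (bigD1 i) //= expr2 lerDl.
by apply: sumr_ge0 => j _; rewrite -expr2 sqr_ge0.
Qed.

Lemma enorm_le_sum u : enorm u <= \sum_i `|u 0 i|.
Proof.
have S0 : 0 <= \sum_i `|u 0 i| by apply: sumr_ge0.
rewrite -(@ler_sqr _ (enorm u)) ?nnegrE ?enorm_ge0 // enorm_sqr.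
rewrite [X in _ <= X]expr2 /dot mulr_sumr ler_sum // => i _.
have ui : `|u 0 i| <= \sum_i `|u 0 i|.
  by rewrite (bigD1 i) //= lerDl sumr_ge0.
apply: (le_trans (ler_norm _)); rewrite normrM.
by apply: ler_wpM2r.
Qed.


Definition mnorm (A : 'M[R]_n) : R := \sum_i \sum_j `|A i j|.

Lemma mnorm_ge0 A : 0 <= mnorm A.
Proof. by apply: sumr_ge0 => i _; apply: sumr_ge0. Qed.

Lemma enorm_mul u A : enorm (u *m A) <= mnorm A * enorm u.
Proof.
apply: (le_trans (enorm_le_sum _)).
rewrite /mnorm exchange_big /= mulr_suml; apply: ler_sum => j _.
rewrite mxE mulr_suml; apply: (le_trans (ler_norm_sum _ _ _)).
apply: ler_sum => i _; rewrite normrM mulrC.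
by apply: ler_wpM2l => //; apply: enorm_coord.
Qed.

Lemma mnorm_tr A : mnorm A^T = mnorm A.
Proof.
rewrite /mnorm exchange_big; apply: eq_bigr => i _; apply: eq_bigr => j _.
by rewrite mxE.
Qed.

Lemma mnormD A B : mnorm (A + B) <= mnorm A + mnorm B.
Proof.
rewrite /mnorm -big_split; apply: ler_sum => i _.
rewrite -big_split; apply: ler_sum => j _; rewrite mxE; exact: ler_normD.
Qed.

Lemma mnorm_le A (e : R) : (forall i j, `|A i j| <= e) -> mnorm A <= n%:R * (n%:R * e).
Proof.
move=> h; rewrite /mnorm.
have -> : n%:R * (n%:R * e) = \sum_(i < n) \sum_(j < n) e.
  by rewrite !sumr_const !card_ord !mulr_natl.
by apply: ler_sum => i _; apply: ler_sum => j _.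
Qed.

Lemma dot_mul_tr b h A : dot (b *m A^T) h = dot b (h *m A).
Proof.
rewrite /dot.
have -> : \sum_i (b *m A^T) 0 i * h 0 i = \sum_i \sum_j b 0 j * A i j * h 0 i.
  by apply: eq_bigr => i _; rewrite mxE mulr_suml; apply: eq_bigr => j _; rewrite mxE.
rewrite exchange_big; apply: eq_bigr => j _ /=.
rewrite mxE mulr_sumr; apply: eq_bigr => i _; by rewrite mulrA mulrAC.
Qed.

Lemma pnorm_ge0 (p : vec * vec) : 0 <= pnorm p.
Proof. by rewrite /pnorm le_max enorm_ge0. Qed.

Lemma pnorm_l a b : enorm a <= pnorm (a, b).
Proof. by rewrite /pnorm le_max lexx. Qed.

Lemma pnorm_r a b : enorm b <= pnorm (a, b).
Proof. by rewrite /pnorm le_max lexx orbT. Qed.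

Lemma pnorm_le a b (e : R) : enorm a <= e -> enorm b <= e -> pnorm (a, b) <= e.
Proof. by move=> h1 h2; rewrite /pnorm ge_max h1 h2. Qed.

Lemma pnorm_leP (p : vec * vec) (e : R) : pnorm p <= e -> enorm p.1 <= e /\ enorm p.2 <= e.
Proof. by case: p => a b; rewrite /pnorm ge_max => /andP. Qed.

End LinAlg.

Section Sup.
Context {R : realType}.

Lemma compact_unif (T : R) (H : R -> R -> Prop) :
  0 <= T ->
  (forall t (d d' : R), 0 < d' -> d' <= d -> H t d -> H t d') ->
  (forall t0, in_T T t0 -> exists r : R, 0 < r /\
     forall t, in_T T t -> `|t - t0| <= r -> H t r) ->
  exists d : R, 0 < d /\ forall t, in_T T t -> H t d.
Proof.
move=> T0 mono loc.
pose S := fun s => in_T T s /\ exists d : R, 0 < d /\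
   forall t, 0 <= t -> t <= s -> H t d.
have S0 : S 0.
  have [r [r0 hr]] := loc 0 (conj (lexx 0) T0).
  split; first by split.
  exists r; split => // t t0 ts.
  have -> : t = 0 by apply: le_anti; rewrite ts t0.
  by apply: hr; [split | rewrite subrr normr0 ltW].
have ub : forall x, S x -> x <= T by move=> x [[]].
have hs : has_sup S by split; [exists 0 | exists T].
set c := sup S.
have c0 : 0 <= c by apply: sup_upper_bound.
have cT : c <= T by apply: ge_sup => //; exists 0.
have [r [r0 hr]] := loc c (conj c0 cT).
have [s Ss cs] := sup_adherent r0 hs.
rewrite -/c in cs.
have sc : s <= c by apply: sup_upper_bound.
have [_ [d [d0 hd]]] := Ss.
set d' := Num.min d r.
have d'0 : 0 < d' by rewrite lt_min d0 r0.
have key : forall t, 0 <= t -> t <= c + r -> t <= T -> H t d'.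
  move=> t t0 tcr tT.
  have [ts|st] := lerP t s.
    by apply: (mono t d) => //; [rewrite ge_min lexx | apply: hd].
  apply: (mono t r) => //; first by rewrite ge_min lexx orbT.
  apply: hr; first by split.
  by rewrite ler_norml; apply/andP; split; lra.
have [h|h] := lerP (c + r) T.
  have : S (c + r).
    split; first by split => //; lra.
    by exists d'; split => // t t0 tcr; apply: key => //; lra.
  move=> /(sup_upper_bound hs); rewrite -/c; lra.
exists d'; split => // t [t0 tT]; apply: key => //; lra.
Qed.

Lemma lip_glob n (g : R -> 'rV[R]_n) (L : R) :
  (forall s, in_T 1 s -> exists r : R, 0 < r /\ forall s', in_T 1 s' ->
     `|s' - s| <= r -> enorm (g s' - g s) <= L * `|s' - s|) ->
  enorm (g 1 - g 0) <= L.
Proof.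
move=> loc.
pose S := fun s => in_T 1 s /\
   forall sg, 0 <= sg -> sg <= s -> enorm (g sg - g 0) <= L * sg.
have S0 : S 0.
  split; first by split => //; exact: ler01.
  move=> sg t0 ts.
  have -> : sg = 0 by apply: le_anti; rewrite ts t0.
  by rewrite subrr enorm0 mulr0.
have ub : forall x, S x -> x <= 1 by move=> x [[]].
have hs : has_sup S by split; [exists 0 | exists 1].
set c := sup S.
have c0 : 0 <= c by apply: sup_upper_bound.
have cT : c <= 1 by apply: ge_sup => //; exists 0.
have [r [r0 hr]] := loc c (conj c0 cT).
have [s Ss cs] := sup_adherent r0 hs.
rewrite -/c in cs.
have sc : s <= c by apply: sup_upper_bound.
have [[s0 s1] hsS] := Ss.
have key : forall sg, 0 <= sg -> sg <= c + r -> sg <= 1 ->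
    enorm (g sg - g 0) <= L * sg.
  move=> sg t0 tcr tT.
  have [ts|st] := ltrP sg c.
    have e0 : 0 < c - sg by rewrite subr_gt0.
    have [s2 [_ hs2] s2c] := sup_adherent e0 hs.
    rewrite -/c in s2c.
    by apply: hs2 => //; lra.
  have E : g sg - g 0 = (g sg - g c) + (g c - g s) + (g s - g 0).
    by rewrite !addrA !subrK.
  rewrite E.
  have h1 : enorm (g sg - g c) <= L * (sg - c).
    have -> : sg - c = `|sg - c| by rewrite ger0_norm // subr_ge0.
    apply: hr; first by split.
    by rewrite ler_norml; apply/andP; split; lra.
  have h2 : enorm (g c - g s) <= L * (c - s).
    rewrite enormBC.
    have -> : c - s = `|s - c| by rewrite distrC ger0_norm // subr_ge0.
    apply: hr; first by split.
    by rewrite ler_norml; apply/andP; split; lra.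
  have h3 := hsS s s0 (lexx s).
  apply: (le_trans (enormD _ _)).
  apply: (le_trans (lerD (enormD _ _) (lexx _))).
  have -> : L * sg = L * (sg - c) + L * (c - s) + L * s by ring.
  by apply: lerD => //; apply: lerD.
have [h|h] := lerP (c + r) 1.
  have : S (c + r).
    split; first by split => //; lra.
    by move=> sg t0 tcr; apply: key => //; lra.
  move=> /(sup_upper_bound hs); rewrite -/c; lra.
rewrite -[X in _ <= X]mulr1; apply: key => //; lra.
Qed.

End Sup.

Section C1.
Context {R : realType} {n : nat}.
Local Notation vec := 'rV[R]_n.
Variables (T : R) (f : R -> vec -> vec) (ft : R -> vec -> vec)
  (fx : R -> vec -> 'M[R]_n).
Hypothesis hdiff : forall t x, in_T T t ->
       forall eps : R, 0 < eps -> exists delta : R, 0 < delta /\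
         forall s y, in_T T s -> `|s - t| <= delta -> enorm (y - x) <= delta ->
           enorm (f s y - f t x - (s - t) *: ft t x - (y - x) *m fx t x)
             <= eps * Num.max `|s - t| (enorm (y - x)).
Hypothesis hcont : forall t x, in_T T t ->
       forall eps : R, 0 < eps -> exists delta : R, 0 < delta /\
         forall s y, in_T T s -> `|s - t| <= delta -> enorm (y - x) <= delta ->
           enorm (ft s y - ft t x) <= eps /\
           forall i j, `|fx s y i j - fx t x i j| <= eps.

Lemma mnormN (A : 'M[R]_n) : mnorm (- A) = mnorm A.
Proof. by apply: eq_bigr => i _; apply: eq_bigr => j _; rewrite mxE normrN. Qed.

Lemma mnorm_tri (A B C : 'M[R]_n) : mnorm (A - B) <= mnorm (A - C) + mnorm (C - B).
Proof.
have -> : A - B = (A - C) + (C - B) by rewrite addrA subrK.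
exact: mnormD.
Qed.

Lemma mnorm_split (A B : 'M[R]_n) : mnorm A <= mnorm B + mnorm (A - B).
Proof.
have {1}-> : A = B + (A - B) by rewrite addrC subrK.
exact: mnormD.
Qed.

Lemma frechet_x t x : in_T T t -> forall eps : R, 0 < eps -> exists delta : R,
  0 < delta /\ forall y, enorm (y - x) <= delta ->
  enorm (f t y - f t x - (y - x) *m fx t x) <= eps * enorm (y - x).
Proof.
move=> tT eps e0; have [d [d0 hd]] := hdiff x tT e0.
exists d; split => // y hy.
have := hd t y tT; rewrite subrr normr0 scale0r subr0 max_r ?enorm_ge0 //.
by apply => //; apply: ltW.
Qed.

Lemma fx_cont t x : in_T T t -> forall eps : R, 0 < eps -> exists delta : R,
  0 < delta /\ forall s y, in_T T s -> `|s - t| <= delta -> enorm (y - x) <= delta ->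
  mnorm (fx s y - fx t x) <= eps.
Proof.
move=> tT eps e0.
set N := n%:R * n%:R : R.
have N0 : 0 <= N by rewrite /N mulr_ge0.
set e := eps / (N + 1).
have e0' : 0 < e by rewrite /e divr_gt0 //; lra.
have [d [d0 hd]] := hcont x tT e0'.
exists d; split => // s y sT st yx.
have hm : mnorm (fx s y - fx t x) <= n%:R * (n%:R * e).
  apply: mnorm_le => i j; rewrite !mxE.
  exact: (proj2 (hd s y sT st yx)).
have : N * e + e = eps by rewrite /e; field; lra.
move: hm; rewrite mulrA -/N; nra.
Qed.

Lemma f_lip t x : in_T T t -> exists delta : R, 0 < delta /\ forall y,
  enorm (y - x) <= delta ->
  enorm (f t y - f t x) <= (mnorm (fx t x) + 1) * enorm (y - x).
Proof.
move=> tT; have [d [d0 hd]] := frechet_x x tT ltr01.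
exists d; split => // y hy.
have -> : f t y - f t x = (f t y - f t x - (y - x) *m fx t x) + (y - x) *m fx t x.
  by rewrite subrK.
apply: (le_trans (enormD _ _)).
have := hd y hy; have := enorm_mul (y - x) (fx t x); lra.
Qed.

Variable xf : R -> vec.
Hypothesis hxf : cont_on T xf.

Lemma loc_fx t0 : in_T T t0 -> forall eta : R, 0 < eta -> exists rho : R, 0 < rho /\
  forall t, in_T T t -> `|t - t0| <= rho -> forall xi, enorm (xi - xf t) <= rho ->
  mnorm (fx t xi - fx t0 (xf t0)) <= eta.
Proof.
move=> t0T eta e0.
have [d1 [d10 hd1]] := fx_cont (xf t0) t0T e0.
have d20 : 0 < d1 / 2 by rewrite divr_gt0.
have [d2 [d20' hd2]] := hxf t0T d20.
exists (Num.min (d1 / 2) d2); split; first by rewrite lt_min d20 d20'.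
move=> t tT tt0 xi hxi.
have m1 := ge_min (Num.min (d1/2) d2) (d1 / 2) d2.
rewrite lexx /= in m1.
have m2 : Num.min (d1/2) d2 <= d1 / 2 by rewrite ge_min lexx.
have m3 : Num.min (d1/2) d2 <= d2 by rewrite ge_min lexx orbT.
apply: hd1 => //; first by lra.
have := hd2 t tT ltac:(lra).
have : enorm (xi - xf t0) <= enorm (xi - xf t) + enorm (xf t - xf t0).
  by have := enormD (xi - xf t) (xf t - xf t0); rewrite addrA subrK.
lra.
Qed.

Hypothesis T0 : 0 <= T.

Lemma unif_bound : exists delta : R, 0 < delta /\ forall t, in_T T t ->
  forall xi, enorm (xi - xf t) <= delta -> mnorm (fx t xi) <= delta^-1.
Proof.
apply: (compact_unif (H := fun t d => forall xi, enorm (xi - xf t) <= d ->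
   mnorm (fx t xi) <= d^-1)) => //.
  move=> t d d' d'0 dd h xi hxi.
  apply: (le_trans (h xi _)); first by apply: le_trans dd.
  have d0 : 0 < d by apply: lt_le_trans dd.
  by rewrite invf_pge ?posrE ?invr_gt0 // invrK.
move=> t0 t0T.
have [rho [rho0 hrho]] := loc_fx t0T ltr01.
set B := mnorm (fx t0 (xf t0)) + 1.
have B0 : 0 < B by rewrite /B; have := mnorm_ge0 (fx t0 (xf t0)); lra.
exists (Num.min rho B^-1); split; first by rewrite lt_min rho0 invr_gt0 B0.
have m2 : Num.min rho B^-1 <= rho by rewrite ge_min lexx.
have m3 : Num.min rho B^-1 <= B^-1 by rewrite ge_min lexx orbT.
have mpos : 0 < Num.min rho B^-1 by rewrite lt_min rho0 invr_gt0 B0.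
move=> t tT tt0 xi hxi.
apply: (le_trans (mnorm_split _ (fx t0 (xf t0)))).
have h1 : mnorm (fx t xi - fx t0 (xf t0)) <= 1.
  by apply: hrho => //; apply: le_trans m2.
apply: (@le_trans _ _ B); first by rewrite /B; lra.
by rewrite -invf_pge ?posrE.
Qed.

Lemma unif_cont eta : 0 < eta -> exists delta : R, 0 < delta /\ forall t, in_T T t ->
  forall xi xi', enorm (xi - xf t) <= delta -> enorm (xi' - xf t) <= delta ->
  mnorm (fx t xi - fx t xi') <= eta.
Proof.
move=> e0.
apply: (compact_unif (H := fun t d => forall xi xi', enorm (xi - xf t) <= d ->
   enorm (xi' - xf t) <= d -> mnorm (fx t xi - fx t xi') <= eta)) => //.
  move=> t d d' d'0 dd h xi xi' h1 h2.
  by apply: h; apply: le_trans dd.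
move=> t0 t0T.
have e20 : 0 < eta / 2 by rewrite divr_gt0.
have [rho [rho0 hrho]] := loc_fx t0T e20.
exists rho; split => // t tT tt0 xi xi' h1 h2.
apply: (le_trans (mnorm_tri _ _ (fx t0 (xf t0)))).
have := hrho t tT tt0 xi h1.
have := hrho t tT tt0 xi' h2.
rewrite -mnormN opprB; lra.
Qed.

End C1.

Section MVT.
Context {R : realType} {n : nat}.
Local Notation vec := 'rV[R]_n.
Variables (T : R) (f : R -> vec -> vec) (ft : R -> vec -> vec)
  (fx : R -> vec -> 'M[R]_n).
Hypothesis hdiff : forall t x, in_T T t ->
       forall eps : R, 0 < eps -> exists delta : R, 0 < delta /\
         forall s y, in_T T s -> `|s - t| <= delta -> enorm (y - x) <= delta ->
           enorm (f s y - f t x - (s - t) *: ft t x - (y - x) *m fx t x)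
             <= eps * Num.max `|s - t| (enorm (y - x)).

Lemma mvt_f t u x (M : 'M[R]_n) (eta : R) : in_T T t -> 0 < eta ->
  (forall s, in_T 1 s -> mnorm (fx t (u + s *: (x - u)) - M) <= eta) ->
  enorm (f t x - f t u - (x - u) *m M) <= 2 * eta * enorm (x - u).
Proof.
move=> tT e0 hM.
set D := x - u.
set e := enorm D.
have e0' : 0 <= e := enorm_ge0 D.
pose g s := f t (u + s *: D) - s *: (D *m M).
have E : f t x - f t u - D *m M = g 1 - g 0.
  have ux : u + 1 *: D = x by rewrite scale1r /D addrC subrK.
  have u0 : u + 0 *: D = u by rewrite scale0r addr0.
  rewrite /g ux u0; set W := D *m M.
  by apply/rowP => i; rewrite !mxE /=; ring.
rewrite E; apply: lip_glob => s sI.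
set xi := u + s *: D.
have [d [d0 hd]] := frechet_x hdiff xi tT e0.
have r0 : 0 < d / (e + 1) by rewrite divr_gt0 //; lra.
exists (d / (e + 1)); split => // s' s'I ss'.
have Exi : u + s' *: D - xi = (s' - s) *: D.
  by apply/rowP => i; rewrite /xi !mxE /=; ring.
have nxi : enorm (u + s' *: D - xi) = `|s' - s| * e by rewrite Exi enormZ.
have nd : enorm (u + s' *: D - xi) <= d.
  rewrite nxi.
  have : d / (e + 1) * e <= d.
    have -> : d / (e + 1) * e = d - d / (e + 1) by field; lra.
    lra.
  have := normr_ge0 (s' - s); nra.
have Eg : g s' - g s = (f t (u + s' *: D) - f t xi - (u + s' *: D - xi) *m fx t xi)
    + (u + s' *: D - xi) *m (fx t xi - M).
  rewrite Exi -!scalemxAl mulmxBr /g -/xi.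
  set P := D *m fx t xi; set Q := D *m M.
  by apply/rowP => i; rewrite !mxE /=; ring.
rewrite Eg; apply: (le_trans (enormD _ _)).
have h1 := hd _ nd.
have h2 := enorm_mul (u + s' *: D - xi) (fx t xi - M).
have h3 := hM s sI.
rewrite nxi in h1 h2.
have h4 : 0 <= `|s' - s| * e by rewrite mulr_ge0.
have h5 : mnorm (fx t xi - M) * (`|s' - s| * e) <= eta * (`|s' - s| * e).
  by apply: ler_wpM2r.
have -> : 2 * eta * e * `|s' - s| = eta * (`|s' - s| * e) + eta * (`|s' - s| * e) by ring.
lra.
Qed.

End MVT.

Section Normals.
Context {R : realType} {n : nat}.
Local Notation vec := 'rV[R]_n.
Variables (T : R) (f : R -> vec -> vec) (ft : R -> vec -> vec)
  (fx : R -> vec -> 'M[R]_n) (F : vec -> vec -> Prop).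
Hypothesis hdiff : forall t x, in_T T t ->
       forall eps : R, 0 < eps -> exists delta : R, 0 < delta /\
         forall s y, in_T T s -> `|s - t| <= delta -> enorm (y - x) <= delta ->
           enorm (f s y - f t x - (s - t) *: ft t x - (y - x) *m fx t x)
             <= eps * Num.max `|s - t| (enorm (y - x)).
Hypothesis hcont : forall t x, in_T T t ->
       forall eps : R, 0 < eps -> exists delta : R, 0 < delta /\
         forall s y, in_T T s -> `|s - t| <= delta -> enorm (y - x) <= delta ->
           enorm (ft s y - ft t x) <= eps /\
           forall i j, `|fx s y i j - fx t x i j| <= eps.

Lemma myminl (a b : R) : Num.min a b <= a. Proof. by rewrite ge_min lexx. Qed.
Lemma myminr (a b : R) : Num.min a b <= b. Proof. by rewrite ge_min lexx orbT. Qed.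
Lemma myminpos (a b : R) : 0 < a -> 0 < b -> 0 < Num.min a b.
Proof. by move=> ha hb; rewrite lt_min ha hb. Qed.

Lemma gph_sum t x y : gph (sum_map f t F) (x, y) -> F x (y - f t x).
Proof. by rewrite /gph /sum_map /= => -[w [Fw ->]]; rewrite addrC addKr. Qed.

Lemma reg_transform t x y a b : in_T T t ->
  regular_normal (gph (sum_map f t F)) (x, y) (a, b) ->
  regular_normal (gph F) (x, y - f t x) (a + b *m (fx t x)^T, b).
Proof.
move=> tT [Gxy hreg].
have Fxw := gph_sum Gxy.
split; first exact: Fxw.
move: Gxy Fxw; rewrite /gph /sum_map /= => -[w [_ yw]] _.
subst y.
have -> : f t x + w - f t x = w by rewrite addrC addKr.
move=> eps e0.
set M := fx t x; set B := mnorm M; set bb := enorm b.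
have B0 : 0 <= B := mnorm_ge0 M.
have bb0 : 0 <= bb := enorm_ge0 b.
set eta := eps / (2 * (bb + 1)).
have eta0 : 0 < eta by rewrite /eta divr_gt0 //; lra.
have [dF [dF0 hF]] := frechet_x hdiff x tT eta0.
set L := B + eta + 1.
have L0 : 0 < L by rewrite /L; lra.
set e1 := eps / (2 * L).
have e10 : 0 < e1 by rewrite /e1 divr_gt0 //; lra.
have [dG [dG0 hG]] := hreg e1 e10.
have dGL0 : 0 < dG / L by rewrite divr_gt0.
exists (Num.min dF (dG / L)); split; first exact: myminpos.
move=> [x' w'] Fz' hp.
rewrite /psub /= in hp *.
set p := pnorm (x' - x, w' - w) in hp *.
have hx : enorm (x' - x) <= p := pnorm_l _ _.
have hw : enorm (w' - w) <= p := pnorm_r _ _.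
have m1 := myminl dF (dG / L); have m2 := myminr dF (dG / L).
set r := f t x' - f t x - (x' - x) *m M.
have hr : enorm r <= eta * enorm (x' - x) by apply: hF; lra.
have hfx : enorm (f t x' - f t x) <= (B + eta) * p.
  have -> : f t x' - f t x = r + (x' - x) *m M by rewrite /r subrK.
  apply: (le_trans (enormD _ _)).
  have := enorm_mul (x' - x) M; rewrite -/B => h.
  have : B * enorm (x' - x) <= B * p by apply: ler_wpM2l.
  have : eta * enorm (x' - x) <= eta * p by apply: ler_wpM2l => //; lra.
  lra.
have Gz : gph (sum_map f t F) (x', f t x' + w') by exists w'.
have hd2 : enorm (f t x' + w' - (f t x + w)) <= (B + eta) * p + p.
  have E2 : f t x' + w' - (f t x + w) = (f t x' - f t x) + (w' - w).
    by apply/rowP => i; rewrite !mxE /=; ring.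
  rewrite E2; apply: (le_trans (enormD _ _)); clear E2; lra.
have p0 : 0 <= p := pnorm_ge0 _.
have hpd : pnorm (x' - x, f t x' + w' - (f t x + w)) <= L * p.
  by apply: pnorm_le; rewrite /L; nra.
have hpdG : pnorm (x' - x, f t x' + w' - (f t x + w)) <= dG.
  apply: (le_trans hpd).
  have : L * (dG / L) = dG by field; rewrite lt0r_neq0.
  have : L * p <= L * (dG / L) by apply: ler_wpM2l; lra.
  lra.
have := hG (x', f t x' + w') Gz; rewrite /psub /= => /(_ hpdG) hreg'.
have he1L : e1 * L = eps / 2 by rewrite /e1; field; lra.
have hreg2 : e1 * pnorm (x' - x, f t x' + w' - (f t x + w)) <= eps / 2 * p.
  rewrite -he1L -mulrA; apply: ler_wpM2l => //; lra.
have hbr : `|dot b r| <= bb * (eta * p).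
  apply: (le_trans (CS _ _)); apply: ler_wpM2l => //.
  apply: (le_trans hr); apply: ler_wpM2l => //; lra.
have hbe : bb * eta <= eps / 2.
  have : bb * eta + eta = eps / 2 by rewrite /eta; field; lra.
  lra.
have E2 : f t x' + w' - (f t x + w) = (f t x' - f t x) + (w' - w).
  by apply/rowP => i; rewrite !mxE /=; ring.
have hbp : bb * (eta * p) <= eps / 2 * p by rewrite mulrA; apply: ler_wpM2r.
rewrite E2 in hreg2.
move: hreg' hbr; rewrite /pdot /= E2 /r !dotDl dot_mul_tr !dotDr ?dotNr.
move=> h1; rewrite ler_norml => /andP [h2 h3].
clear E2; lra.
Qed.

End Normals.

Section Lim.
Context {R : realType} {n : nat}.
Local Notation vec := 'rV[R]_n.
Variables (T : R) (f : R -> vec -> vec) (ft : R -> vec -> vec)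
  (fx : R -> vec -> 'M[R]_n) (F : vec -> vec -> Prop).
Hypothesis hdiff : forall t x, in_T T t ->
       forall eps : R, 0 < eps -> exists delta : R, 0 < delta /\
         forall s y, in_T T s -> `|s - t| <= delta -> enorm (y - x) <= delta ->
           enorm (f s y - f t x - (s - t) *: ft t x - (y - x) *m fx t x)
             <= eps * Num.max `|s - t| (enorm (y - x)).
Hypothesis hcont : forall t x, in_T T t ->
       forall eps : R, 0 < eps -> exists delta : R, 0 < delta /\
         forall s y, in_T T s -> `|s - t| <= delta -> enorm (y - x) <= delta ->
           enorm (ft s y - ft t x) <= eps /\
           forall i j, `|fx s y i j - fx t x i j| <= eps.

Lemma lim_transform t x y ys xs : in_T T t ->
  coderiv (sum_map f t F) x y ys xs ->
  coderiv F x (y - f t x) ys (xs - ys *m (fx t x)^T).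
Proof.
move=> tT [Gxy [zk [vk [hk [zc vc]]]]].
split; first exact: gph_sum Gxy.
set M := fx t x.
exists (fun k => ((zk k).1, (zk k).2 - f t (zk k).1)).
exists (fun k => ((vk k).1 + (vk k).2 *m (fx t (zk k).1)^T, (vk k).2)).
split; [|split].
- move=> k; have [_ hr] := hk k.
  have hr' : regular_normal (gph (sum_map f t F)) ((zk k).1, (zk k).2)
      ((vk k).1, (vk k).2) by rewrite -!surjective_pairing.
  have h := reg_transform hdiff tT hr'.
  by split; [exact: h.1 | exact: h].
- move=> e e0.
  have [dL [dL0 hL]] := f_lip hdiff x tT.
  set C := mnorm M + 1.
  have C0 : 1 <= C by rewrite /C; have := mnorm_ge0 M; lra.
  have q0 : 0 < e / (C + 1) by rewrite divr_gt0 //; lra.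
  have [N hN] := zc _ (myminpos dL0 q0).
  exists N => k kN.
  have := hN k kN; rewrite /psub /= => /pnorm_leP [h1 h2].
  rewrite /= in h1 h2.
  have m1 : Num.min dL (e / (C + 1)) <= dL := myminl _ _.
  have m2 : Num.min dL (e / (C + 1)) <= e / (C + 1) := myminr _ _.
  set e' := Num.min dL (e / (C + 1)) in h1 h2 m1 m2.
  have he : (C + 1) * (e / (C + 1)) = e by field; rewrite lt0r_neq0 //; lra.
  have e'0 : 0 <= e' by apply: le_trans h1; apply: enorm_ge0.
  apply: pnorm_le => /=.
    have : e / (C + 1) <= e by nra.
    lra.
  have -> : (zk k).2 - f t (zk k).1 - (y - f t x) =
      ((zk k).2 - y) - (f t (zk k).1 - f t x).
    by apply/rowP => i; rewrite !mxE /=; ring.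
  apply: (le_trans (enormB _ _)).
  have h3 := hL (zk k).1 (le_trans h1 m1); rewrite -/M -/C in h3.
  have : C * enorm ((zk k).1 - x) <= C * e' by apply: ler_wpM2l => //; lra.
  have : (C + 1) * e' <= (C + 1) * (e / (C + 1)) by apply: ler_wpM2l => //; lra.
  lra.
- move=> e e0.
  set a := xs; set b := - ys.
  set B := mnorm M; set bb := enorm b.
  have B0 : 0 <= B := mnorm_ge0 M.
  have bb0 : 0 <= bb := enorm_ge0 b.
  have q0 : 0 < e / (3 * (bb + 1)) by rewrite divr_gt0 //; lra.
  have eta0 : 0 < Num.min 1 (e / (3 * (bb + 1))) by apply: myminpos.
  set eta := Num.min 1 (e / (3 * (bb + 1))) in eta0.
  have et1 : eta <= 1 := myminl _ _.
  have et2 : eta <= e / (3 * (bb + 1)) := myminr _ _.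
  have [dc [dc0 hc]] := fx_cont hcont x tT eta0.
  have [N1 hN1] := zc _ dc0.
  have q1 : 0 < e / (3 * (B + 2)) by rewrite divr_gt0 //; lra.
  have [N2 hN2] := vc _ q1.
  exists (maxn N1 N2) => k kN.
  have k1 : (N1 <= k)%N by apply: leq_trans kN; apply: leq_maxl.
  have k2 : (N2 <= k)%N by apply: leq_trans kN; apply: leq_maxr.
  have := hN1 k k1; rewrite /psub /= => /pnorm_leP [hx _].
  have := hN2 k k2; rewrite /psub /= => /pnorm_leP [ha hb].
  rewrite /= in hx ha hb.
  have hMk : mnorm (fx t (zk k).1 - M) <= eta.
    by apply: hc => //; rewrite subrr normr0 ltW.
  set Mk := fx t (zk k).1 in hMk *.
  set ak := (vk k).1 in ha *; set bk := (vk k).2 in hb *.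
  have hMk2 : mnorm Mk <= B + 1.
    by apply: (le_trans (mnorm_split Mk M)); rewrite -/B; lra.
  have he1 : e / (3 * (B + 2)) * (3 * (B + 2)) = e by field; rewrite lt0r_neq0 //; lra.
  have he2 : e / (3 * (bb + 1)) * (3 * (bb + 1)) = e by field; rewrite lt0r_neq0 //; lra.
  apply: pnorm_le => /=; last by rewrite -/b; nra.
  have -> : ak + bk *m Mk^T - (a - ys *m M^T) =
      (ak - a) + (bk - b) *m Mk^T + b *m (Mk - M)^T.
    rewrite [(Mk - M)^T]raddfB mulmxBl mulmxBr /b !mulNmx.
    set P := bk *m Mk^T; set Q := ys *m Mk^T; set S := ys *m M^T.
    by apply/rowP => i; rewrite !mxE /=; ring.
  apply: (le_trans (enormD _ _)).
  apply: (le_trans (lerD (enormD _ _) (lexx _))).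
  have h1 := enorm_mul (bk - b) Mk^T; rewrite mnorm_tr in h1.
  have h2 := enorm_mul b (Mk - M)^T; rewrite mnorm_tr -/bb in h2.
  have h3 : mnorm Mk * enorm (bk - b) <= (B + 1) * (e / (3 * (B + 2))).
    apply: (le_trans (ler_wpM2r (enorm_ge0 _) hMk2)).
    by apply: ler_wpM2l => //; lra.
  have h4 : mnorm (Mk - M) * bb <= e / (3 * (bb + 1)) * bb.
    by apply: ler_wpM2r => //; lra.
  have h5 : e / (3 * (bb + 1)) * bb <= e / 3.
    have : e / (3 * (bb + 1)) * bb + e / (3 * (bb + 1)) = e / 3.
      by field; rewrite lt0r_neq0 //; lra.
    lra.
  have h6 : (B + 1) * (e / (3 * (B + 2))) + e / (3 * (B + 2)) = e / 3.
    by field; rewrite lt0r_neq0 //; lra.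
  lra.
Qed.

End Lim.

Unset Implicit Arguments.
Set Strict Implicit.

Theorem theorem3p2 (R : realType) (n : nat) (T : R)
    (F : 'rV[R]_n -> 'rV[R]_n -> Prop) (f : R -> 'rV[R]_n -> 'rV[R]_n)
    (xf : R -> 'rV[R]_n) :
  0 < T ->
  closed_pset (gph F) ->
  C1_on T f ->
  cont_on T xf ->
  (forall t, in_T T t -> sum_map f t F (xf t) 0) ->
  unif_semismooth_star F
    (fun p => exists t, in_T T t /\ p = (xf t, - f t (xf t))) ->
  forall eps : R, 0 < eps -> exists delta : R, 0 < delta /\
    forall t, in_T T t ->
    forall x y : 'rV[R]_n, enorm (x - xf t) <= delta -> enorm y <= delta ->
    sum_map f t F x y ->
    forall ystar xstar : 'rV[R]_n, coderiv (sum_map f t F) x y ystar xstar ->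
      `|dot xstar (x - xf t) - dot ystar y|
        <= eps * pnorm (xstar, ystar) * pnorm (x - xf t, y).
Proof.
move=> T0 _ [ft [fx [hdiff hcont]]] hxf _ hss eps e0.
have T0' : 0 <= T by apply: ltW.
have [dB [dB0 hB]] := unif_bound hcont hxf T0'.
set K := dB^-1.
have K0 : 0 <= K by rewrite /K invr_ge0 ltW.
have eta0 : 0 < Num.min (eps / 4) (1 / 2) by apply: myminpos; rewrite divr_gt0.
set eta := Num.min (eps / 4) (1 / 2) in eta0.
have et1 : eta <= eps / 4 := myminl _ _.
have et2 : eta <= 1 / 2 := myminr _ _.
have [dU [dU0 hU]] := unif_cont hcont hxf T0' eta0.
set e1 := eps / (2 * ((1 + K) * (2 + K))).
have e10 : 0 < e1 by rewrite /e1 divr_gt0 // mulr_gt0 // mulr_gt0 //; lra.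
have [dS [dS0 hS]] := hss e1 e10.
have dSK : 0 < dS / (2 + K) by rewrite divr_gt0 //; lra.
have d0 : 0 < Num.min (Num.min dB dU) (dS / (2 + K)).
  by apply: myminpos => //; apply: myminpos.
exists (Num.min (Num.min dB dU) (dS / (2 + K))); split => //.
have m1 := myminl (Num.min dB dU) (dS / (2 + K)).
have m2 := myminr (Num.min dB dU) (dS / (2 + K)).
have m3 := myminl dB dU; have m4 := myminr dB dU.
set d := Num.min (Num.min dB dU) (dS / (2 + K)) in d0 m1 m2 *.
move=> t tT x y hx hy Gxy ys xs cod.
set u := xf t in hx *.
set M := fx t x.
have hM : mnorm M <= K by apply: hB => //; lra.
have cod' := lim_transform hdiff hcont tT cod.
have Fxw := gph_sum Gxy.
set w := y - f t x in cod' Fxw.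
set z := - f t u.
set e := enorm (x - u).
have e0' : 0 <= e := enorm_ge0 _.
have hxe : e <= d := hx.
set rem := f t x - f t u - (x - u) *m M.
have hrem : enorm rem <= 2 * eta * e.
  apply: (mvt_f hdiff) => // s [s0 s1].
  apply: hU => //.
    rewrite (_ : u + s *: (x - u) - u = s *: (x - u)); last first.
      by apply/rowP => i; rewrite !mxE /=; ring.
    rewrite enormZ ger0_norm // -/e.
    have : s * e <= e by nra.
    lra.
  lra.
have Ewz : w - z = y - rem - (x - u) *m M.
  rewrite /w /z /rem; set P := (x - u) *m M.
  by apply/rowP => i; rewrite !mxE /=; ring.
have hxM : enorm ((x - u) *m M) <= K * e.
  apply: (le_trans (enorm_mul _ _)); apply: ler_wpM2r => //.
have hwz : enorm (w - z) <= enorm y + 2 * eta * e + K * e.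
  rewrite Ewz; apply: (le_trans (enormB _ _)).
  have := enormB y rem; lra.
have hwzd : enorm (w - z) <= dS.
  have : e <= d by [].
  have : (2 + K) * d <= (2 + K) * (dS / (2 + K)) by apply: ler_wpM2l => //; lra.
  have : (2 + K) * (dS / (2 + K)) = dS by field; rewrite lt0r_neq0 //; lra.
  have : K * e <= K * d by apply: ler_wpM2l.
  have : eta * e <= eta * d by apply: ler_wpM2l => //; lra.
  have : eta * d <= 1 / 2 * d by apply: ler_wpM2r; lra.
  lra.
have hxd : enorm (x - u) <= dS.
  have : dS / (2 + K) <= dS.
    have : (2 + K) * (dS / (2 + K)) = dS by field; rewrite lt0r_neq0 //; lra.
    nra.
  lra.
have Wuz : exists t0, in_T T t0 /\ (u, z) = (xf t0, - f t0 (xf t0)) by exists t.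
have hmain := hS u z Wuz x w hxd hwzd Fxw ys (xs - ys *m M^T) cod'.
set P := pnorm (xs, ys); set Q := pnorm (x - u, y).
have P0 : 0 <= P := pnorm_ge0 _.
have Q0 : 0 <= Q := pnorm_ge0 _.
have hxsP : enorm xs <= P := pnorm_l _ _.
have hysP : enorm ys <= P := pnorm_r _ _.
have heQ : e <= Q := pnorm_l _ _.
have hyQ : enorm y <= Q := pnorm_r _ _.
have hP1 : pnorm (xs - ys *m M^T, ys) <= (1 + K) * P.
  apply: pnorm_le.
    apply: (le_trans (enormB _ _)).
    have := enorm_mul ys M^T; rewrite mnorm_tr => h.
    have : mnorm M * enorm ys <= K * P.
      by apply: ler_pM; [exact: mnorm_ge0 | exact: enorm_ge0 | exact: hM | exact: hysP].
    lra.
  have : 0 <= K * P by apply: mulr_ge0.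
  lra.
have hQ1 : pnorm (x - u, w - z) <= (2 + K) * Q.
  apply: pnorm_le.
    have : 0 <= (1 + K) * Q by apply: mulr_ge0 => //; lra.
    move=> h; apply: (le_trans heQ); lra.
  have : K * e <= K * Q by apply: ler_wpM2l.
  have : eta * e <= 1 / 2 * Q by apply: ler_pM => //; lra.
  lra.
have Edot : dot (xs - ys *m M^T) (x - u) - dot ys (w - z) =
    dot xs (x - u) - dot ys y + dot ys rem.
  rewrite Ewz dotBl dot_mul_tr !dotBr; lra.
have hp1 : 0 <= pnorm (xs - ys *m M^T, ys) := pnorm_ge0 _.
have hp2 : 0 <= pnorm (x - u, w - z) := pnorm_ge0 _.
have hA : e1 * pnorm (xs - ys *m M^T, ys) * pnorm (x - u, w - z)
    <= eps / 2 * P * Q.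
  have -> : eps / 2 * P * Q = e1 * ((1 + K) * P) * ((2 + K) * Q).
    by rewrite /e1; field; apply/andP; split; rewrite lt0r_neq0 //; lra.
  apply: ler_pM => //; first by apply: mulr_ge0 => //; lra.
  by apply: ler_wpM2l => //; lra.
have hB2 : `|dot ys rem| <= eps / 2 * P * Q.
  apply: (le_trans (CS _ _)).
  have : enorm rem <= eps / 2 * Q.
    apply: (le_trans hrem).
    have : 2 * eta <= eps / 2 by lra.
    by move=> h; apply: ler_pM => //; lra.
  move=> h; rewrite -mulrA mulrCA.
  by apply: ler_pM; [exact: enorm_ge0 | exact: enorm_ge0 | exact: hysP | exact: h].
rewrite Edot in hmain.
have := ler_normD (dot xs (x - u) - dot ys y + dot ys rem) (- dot ys rem).
rewrite addrK normrN.
lra.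
Qed.
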